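(* Let $C=C(m,n;k,l;c,d)$ be a $C$-shaped supergrid graph and $s,t$ two distinct vertices of $C$ labeled so that $s_x\leq t_x$. If $C$ has a Hamiltonian path from $s$ to $t$, then $(C,s,t)$ satisfies none of the conditions (F1), (F3), (F7), (F8), (F9), where: (F1) $s$ or $t$ is a cut vertex of $C$, or $\{s,t\}$ is a vertex cut of $C$; (F3) there is a vertex $w\in V(C)$ with $\deg(w)=1$, $w\neq s$, $w\neq t$; (F7) $m=3$, $a=2$, and either ($c=1$ and $\{s,t\}=\{(1,1),(2,2)\}$ or $\{(1,2),(2,1)\}$) or ($d=1$ and $\{s,t\}=\{(1,n),(2,n-1)\}$ or $\{(1,n-1),(2,n)\}$); (F8) $n=3$, $k=c=d=1$, and one of: (1) $a\geq 2$, $s_x=t_x=m-1$, $|s_y-t_y|=2$; (2) $a=2$, $s_x=1$, $t_x=2$, $|s_y-t_y|=2$; (3) $a>2$, $s_x<m-1$, $t=(m-1,2)$; (F9) $a=1$, and ($s_y,t_y\leq c$ or $s_y,t_y>c+l$).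
   Context: The supergrid graph $S^\infty$ has vertex set $\mathbb{Z}^2$, two distinct vertices $u,v$ being adjacent iff $|u_x-v_x|\leq 1$ and $|u_y-v_y|\leq 1$; a supergrid graph is a finite vertex-induced subgraph of $S^\infty$. For integers $m\geq 2$, $n\geq 3$, $k,l,c\geq 1$ with $d=n-l-c\geq 1$ and $a=m-k\geq 1$, $C(m,n;k,l;c,d)$ is the supergrid graph induced by $\{(x,y):1\leq x\leq m,\ 1\leq y\leq n\}\setminus\{(x,y): a+1\leq x\leq m,\ c+1\leq y\leq c+l\}$. A cut vertex $v$: $C-v$ disconnected; a vertex cut $V_1$: $C-V_1$ disconnected. A Hamiltonian path from $s$ to $t$ is a simple path from $s$ to $t$ visiting every vertex exactly once. The paper assumes throughout that the given vertices are named so that $s_x\leq t_x$. *)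

(* Defs.v *)
(* vertices of S^oo restricted to positive coordinates are
   represented as pairs of naturals (x, y). *)
From mathcomp Require Import all_boot.
Set Implicit Arguments. Unset Strict Implicit. Unset Printing Implicit Defensive.

Definition vtx := (nat * nat)%type.

Definition sg_adj (u v : vtx) : bool :=
  [&& u != v, (u.1 <= v.1.+1) && (v.1 <= u.1.+1) & (u.2 <= v.2.+1) && (v.2 <= u.2.+1)].

(* vertex set of C(m,n;k,l;c,d), with a = m - k, d = n - l - c *)
Definition inC (m n k l c : nat) (v : vtx) : bool :=
  [&& 1 <= v.1 <= m, 1 <= v.2 <= n &
      ~~ ((m - k + 1 <= v.1 <= m) && (c + 1 <= v.2 <= c + l))].

Definition walk_in (P : vtx -> bool) (p : seq vtx) : Prop :=
  all P p /\ sorted sg_adj p.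

Definition ham_path (P : vtx -> bool) (s t : vtx) : Prop :=
  exists p : seq vtx,
    [/\ walk_in P p, uniq p, (forall v, P v -> v \in p),
        head s p = s /\ p != [::] & last s p = t].

Definition connected_in (P : vtx -> bool) : Prop :=
  forall u w, P u -> P w ->
    exists p : seq vtx, [/\ walk_in P (u :: p) & last u p = w].

Definition disconnected_in (P : vtx -> bool) : Prop := ~ connected_in P.

Definition cut_vertex (P : vtx -> bool) (v : vtx) : Prop :=
  P v /\ disconnected_in (fun u => P u && (u != v)).

Definition vertex_cut2 (P : vtx -> bool) (s t : vtx) : Prop :=
  P s /\ P t /\ disconnected_in (fun u => [&& P u, u != s & u != t]).

Definition vertsC (m n k l c : nat) : seq vtx :=
  [seq v <- [seq (x, y) | x <- iota 1 m, y <- iota 1 n] | inC m n k l c v].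

Definition degC (m n k l c : nat) (w : vtx) : nat :=
  count (sg_adj w) (vertsC m n k l c).

Definition dist2 (p q : nat) : Prop := p = q + 2 \/ q = p + 2.

Definition same_pair (s t u v : vtx) : Prop :=
  (s = u /\ t = v) \/ (s = v /\ t = u).

Definition F1 (m n k l c : nat) (s t : vtx) : Prop :=
  cut_vertex (inC m n k l c) s \/ cut_vertex (inC m n k l c) t \/
  vertex_cut2 (inC m n k l c) s t.

Definition F3 (m n k l c : nat) (s t : vtx) : Prop :=
  exists w, [/\ inC m n k l c w, degC m n k l c w = 1, w <> s & w <> t].

Definition F7 (m n k l c : nat) (s t : vtx) : Prop :=
  let a := m - k in let d := n - l - c in
  [/\ m = 3, a = 2 &
   (c = 1 /\ (same_pair s t (1,1) (2,2) \/ same_pair s t (1,2) (2,1))) \/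
   (d = 1 /\ (same_pair s t (1,n) (2,n.-1) \/ same_pair s t (1,n.-1) (2,n)))].

Definition F8 (m n k l c : nat) (s t : vtx) : Prop :=
  let a := m - k in let d := n - l - c in
  [/\ n = 3, k = 1, c = 1, d = 1 &
   [\/ [/\ 2 <= a, s.1 = m.-1, t.1 = m.-1 & dist2 s.2 t.2],
       [/\ a = 2, s.1 = 1, t.1 = 2 & dist2 s.2 t.2]
     | [/\ 2 < a, s.1 < m.-1 & t = (m.-1, 2)]]].

Definition F9 (m n k l c : nat) (s t : vtx) : Prop :=
  let a := m - k in
  a = 1 /\ ((s.2 <= c /\ t.2 <= c) \/ (c + l < s.2 /\ c + l < t.2)).

(* Main.v *)
Require Import Defs.
From mathcomp Require Import all_boot zify.
Set Implicit Arguments. Unset Strict Implicit.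

Definition hp (P : vtx -> bool) (s t : vtx) (f : nat -> vtx) (N : nat) : Prop :=
  [/\ 0 < N, f 0 = s, f N.-1 = t,
   (forall i, i.+1 < N -> sg_adj (f i) (f i.+1)) &
   [/\ (forall i j, i < N -> j < N -> f i = f j -> i = j),
   (forall i, i < N -> P (f i)) &
   (forall v, P v -> exists2 i, i < N & f i = v)]].

Lemma ham_hp P s t : ham_path P s t -> exists f N, hp P s t f N.
Proof.
case=> p [[Pall Psort] Pu Pcov [Ph Pne] Pl].
exists (nth (0,0) p), (size p); split; last split.
- by rewrite lt0n size_eq0.
- by case: p Ph Pne {Pall Psort Pu Pcov Pl}.
- rewrite nth_last; by case: p Pl Pne {Pall Psort Pu Pcov Ph}.
- by move=> i; move/(sortedP (0,0)): Psort; apply.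
- move=> i j hi hj /eqP; rewrite nth_uniq //; by move/eqP.
- by move=> i; move/(all_nthP (0,0)): Pall; apply.
- move=> v /Pcov vp; exists (index v p); [by rewrite index_mem | exact: nth_index].
Qed.

Lemma sg_adjE u v : sg_adj u v =
  [&& (u.1 != v.1) || (u.2 != v.2), u.1 <= v.1.+1, v.1 <= u.1.+1, u.2 <= v.2.+1 & v.2 <= u.2.+1].
Proof. by case: u v => [a b] [c d]; rewrite /sg_adj xpair_eqE negb_and /= !andbA. Qed.

Lemma sg_adj_sym u v : sg_adj u v -> sg_adj v u.
Proof. rewrite !sg_adjE; lia. Qed.

Definition conn (Q : vtx -> bool) u w :=
  exists p : seq vtx, walk_in Q (u :: p) /\ last u p = w.

Lemma conn_refl (Q : vtx -> bool) u : Q u -> conn Q u u.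
Proof. by move=> Qu; exists [::]; rewrite /walk_in /= Qu. Qed.

Lemma conn_step (Q : vtx -> bool) u w : Q u -> Q w -> sg_adj u w -> conn Q u w.
Proof. by move=> Qu Qw a; exists [:: w]; rewrite /walk_in /= Qu Qw a. Qed.

Lemma conn_trans (Q : vtx -> bool) u v w : conn Q u v -> conn Q v w -> conn Q u w.
Proof.
case=> p1 [[A1 S1] L1] [p2 [[A2 S2] L2]].
exists (p1 ++ p2); split; last by rewrite last_cat L1.
split.
- by move: A1 A2 => /= /andP[-> A1] /andP[_ A2]; rewrite all_cat A1 A2.
- by move: S1 S2; rewrite /= cat_path L1 => -> ->.
Qed.

Lemma seg_conn (Q : vtx -> bool) (f : nat -> vtx) i d :
  (forall k, i <= k <= i + d -> Q (f k)) ->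
  (forall k, i <= k -> k < i + d -> sg_adj (f k) (f k.+1)) ->
  conn Q (f i) (f (i + d)) /\ conn Q (f (i + d)) (f i).
Proof.
elim: d => [|d IH] HQ Ha.
  rewrite addn0; have q : Q (f i) by apply: HQ; lia.
  by split; apply: conn_refl.
have [c1 c2] : conn Q (f i) (f (i + d)) /\ conn Q (f (i + d)) (f i).
  by apply: IH => [k hk|k h1 h2]; [apply: HQ|apply: Ha]; lia.
have q1 : Q (f (i + d)) by apply: HQ; lia.
have q2 : Q (f (i + d.+1)) by apply: HQ; lia.
have a : sg_adj (f (i + d)) (f (i + d.+1)) by rewrite addnS; apply: Ha; lia.
split.
- by apply: conn_trans c1 _; apply: conn_step.
- by apply: conn_trans c2; apply: conn_step => //; apply: sg_adj_sym.
Qed.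

Lemma hp_connected P s t f N (Q : vtx -> bool) lo hi :
  hp P s t f N -> hi < N ->
  (forall k, lo <= k <= hi -> Q (f k)) ->
  (forall v, Q v -> exists2 k, lo <= k <= hi & f k = v) ->
  connected_in Q.
Proof.
case=> _ _ _ Ha _ hN HQ Hc u w /Hc [i Hi <-] /Hc [j Hj <-].
have Ha' : forall k, k.+1 < N -> sg_adj (f k) (f k.+1) by [].
case: (leqP i j) => ij.
- have := @seg_conn Q f i (j - i).
  rewrite subnKC //; case => //.
  + by move=> k hk; apply: HQ; lia.
  + by move=> k h1 h2; apply: Ha; lia.
- have := @seg_conn Q f j (i - j).
  rewrite subnKC; last lia; case => //.
  + by move=> k hk; apply: HQ; lia.
  + by move=> k h1 h2; apply: Ha; lia.
Qed.

Section Dummy. End Dummy.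

Lemma hp_inj' P s t f N i j : hp P s t f N -> i < N -> j < N ->
  (f i).1 = (f j).1 -> (f i).2 = (f j).2 -> i = j.
Proof.
case=> _ _ _ _ [I _ _] hi hj e1 e2; apply: I => //.
by move: e1 e2; case: (f i) => a b; case: (f j) => c d /= -> ->.
Qed.

Lemma hp_loc P s t f N x y : hp P s t f N -> P (x, y) ->
  exists i, [/\ i < N, (f i).1 = x & (f i).2 = y].
Proof. by case=> _ _ _ _ [_ _ C] /C [i hi fi]; exists i; rewrite fi. Qed.

Lemma hp_P P s t f N i : hp P s t f N -> i < N -> P (f i).
Proof. by case=> _ _ _ _ [_ C _]; exact: C. Qed.

Lemma hp_adj P s t f N i : hp P s t f N -> i.+1 < N -> sg_adj (f i) (f i.+1).
Proof. by case=> _ _ _ A _; exact: A. Qed.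

Lemma notF1 m n k l c s t f N : hp (inC m n k l c) s t f N -> s <> t ->
  ~ F1 m n k l c s t.
Proof.
move=> H st; have H' := H; case: H' => N0 f0 fN _ [I HP HC].
have ne : forall i j, i < N -> j < N -> i != j -> f i != f j.
  move=> i j hi hj; apply: contra => /eqP e; apply/eqP; exact: I.
have N2 : 1 < N.
  case: N N0 f0 fN {H I HP HC ne} => [|[|N]] //= _ f0 fN; by case: st; rewrite -f0 -fN.
case=> [[_ D]|[[_ D]|[_ [_ D]]]]; apply: D.
- apply: (@hp_connected _ _ _ _ _ _ 1 N.-1 H); first lia.
  + move=> i hi; apply/andP; split; [apply: HP; lia| rewrite -f0; apply: ne; lia].
  + move=> v /andP[/HC [i hi <-]]; rewrite -f0 => ni; exists i => //.
    case: i hi ni => [|i] hi ni; [by rewrite eqxx in ni | lia].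
- apply: (@hp_connected _ _ _ _ _ _ 0 N.-2 H); first lia.
  + move=> i hi; apply/andP; split; [apply: HP; lia| rewrite -fN; apply: ne; lia].
  + move=> v /andP[/HC [i hi <-]]; rewrite -fN => ni; exists i => //.
    case: (ltnP i N.-1) => h1; first lia.
    have e: i = N.-1 by lia.
    by rewrite e eqxx in ni.
- apply: (@hp_connected _ _ _ _ _ _ 1 N.-2 H); first lia.
  + move=> i hi; apply/and3P; split; [apply: HP; lia| rewrite -f0; apply: ne; lia|rewrite -fN; apply: ne; lia].
  + move=> v /and3P[/HC [i hi <-]]; rewrite -f0 -fN => n0 n1; exists i => //.
    case: (ltnP i N.-1) => /= h1; last first.
      have e: i = N.-1 by lia.
      by rewrite e eqxx in n1.
    case: i n0 n1 hi h1 => [|i] n0 n1 hi h1; [by rewrite eqxx in n0 | lia].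
Qed.

Lemma mem_vertsC m n k l c v : inC m n k l c v -> v \in vertsC m n k l c.
Proof.
move=> Hv; rewrite mem_filter Hv /=; apply/allpairsP; exists v.
case: v Hv => x y; rewrite /inC /= !mem_iota => H; split => //; lia.
Qed.

Lemma count2 (a : pred vtx) (s : seq vtx) x y :
  x != y -> x \in s -> y \in s -> a x -> a y -> 1 < count a s.
Proof.
move=> xy xs ys ax ay; rewrite -size_filter.
apply: (@uniq_leq_size _ [:: x; y]); first by rewrite /= inE xy.
by move=> z; rewrite !inE => /orP[]/eqP->; rewrite mem_filter ?ax ?ay.
Qed.

Lemma notF3 m n k l c s t f N : hp (inC m n k l c) s t f N -> s <> t ->
  ~ F3 m n k l c s t.
Proof.
move=> H st; have H' := H; case: H' => N0 f0 fN A [I HP HC].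
case=> w [Cw dw ws wt].
have [i hi fi] := HC _ Cw.
have i0 : i != 0 by apply/eqP => e; apply: ws; rewrite -fi e.
have iN : i != N.-1 by apply/eqP => e; apply: wt; rewrite -fi e.
have a1 : sg_adj (f i.-1) (f i.-1.+1) by apply: A; lia.
have a2 : sg_adj (f i) (f i.+1) by apply: A; lia.
have e1 : i.-1.+1 = i by lia.
rewrite e1 in a1.
have ne : f i.-1 != f i.+1.
  by apply/eqP => /I; lia.
have : 1 < degC m n k l c w.
  rewrite /degC; apply: (@count2 (sg_adj w) _ _ _ ne); try apply: mem_vertsC; try (apply: HP; lia).
  - by rewrite -fi; apply: sg_adj_sym.
  - by rewrite -fi.
by rewrite dw.
Qed.

Lemma ivt_up (f : nat -> vtx) i j h :
  (forall k, i <= k -> k < j -> sg_adj (f k) (f k.+1)) -> i <= j ->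
  (f i).2 <= h -> h <= (f j).2 -> exists k, [/\ i <= k, k <= j & (f k).2 = h].
Proof.
elim: j => [|j IH] A ij h1 h2.
  have e : i = 0 by lia.
  subst i; exists 0; split => //; lia.
case: (ltnP j i) => ji.
  have e : i = j.+1 by lia.
  subst i; exists j.+1; split => //; lia.
case: (leqP h (f j).2) => hj.
  have [|k [k1 k2 k3]] := IH _ ji h1 hj.
    by move=> k k1 k2; apply: A; lia.
  by exists k; split => //; lia.
have := A j ji (ltnSn j); rewrite sg_adjE => a.
exists j.+1; split => //; lia.
Qed.

Lemma ivt_down (f : nat -> vtx) i j h :
  (forall k, i <= k -> k < j -> sg_adj (f k) (f k.+1)) -> i <= j ->
  h <= (f i).2 -> (f j).2 <= h -> exists k, [/\ i <= k, k <= j & (f k).2 = h].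
Proof.
elim: j => [|j IH] A ij h1 h2.
  have e : i = 0 by lia.
  subst i; exists 0; split => //; lia.
case: (ltnP j i) => ji.
  have e : i = j.+1 by lia.
  subst i; exists j.+1; split => //; lia.
case: (leqP (f j).2 h) => hj.
  have [|k [k1 k2 k3]] := IH _ ji h1 hj.
    by move=> k k1 k2; apply: A; lia.
  by exists k; split => //; lia.
have := A j ji (ltnSn j); rewrite sg_adjE => a.
exists j.+1; split => //; lia.
Qed.

Definition mir (n : nat) (v : vtx) : vtx := (v.1, n.+1 - v.2).

Lemma mirror m n k l c s t f N : c + l < n ->
  hp (inC m n k l c) s t f N ->
  hp (inC m n k l (n - l - c)) (mir n s) (mir n t) (fun i => mir n (f i)) N.
Proof.
move=> cl [N0 f0 fN A [I HP HC]]; split => //.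
- by rewrite f0.
- by rewrite fN.
- move=> i hi; have := A i hi; have := HP i (ltnW hi); have := HP i.+1 hi.
  rewrite /mir !sg_adjE /inC /=; lia.
split.
- move=> i j hi hj; have := HP i hi; have := HP j hj; move=> Cj Ci e.
  apply: I => //; move: Ci Cj e; rewrite /mir /inC.
  case: (f i) => a b; case: (f j) => a' b' /= C1 C2 [e1 e2].
  congr pair; lia.
- move=> i hi; have := HP i hi; rewrite /mir /inC; case: (f i) => a b /=; lia.
- case=> x y Cv.
  have Cg : inC m n k l c (mir n (x, y)) by move: Cv; rewrite /mir /inC /=; lia.
  have [i hi fi] := HC _ Cg; exists i => //; rewrite fi /mir /=.
  move: Cv; rewrite /inC /= => Cv; congr pair; lia.
Qed.

Lemma F9_bot m n k l c s t f N : hp (inC m n k l c) s t f N ->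
  m - k = 1 -> c + l < n -> 1 <= c -> 1 <= l -> s.2 <= c -> t.2 <= c -> False.
Proof.
move=> H a cl c1 l1 hs ht; have H' := H; case: H' => N0 f0 fN A [I HP HC].
have Cv : inC m n k l c (1, n) by rewrite /inC /=; lia.
have [i0 [hi0 x0 y0]] := hp_loc H Cv.
have A' : forall k, 0 <= k -> k < N.-1 -> sg_adj (f k) (f k.+1).
  by move=> k' _ h; apply: A; lia.
have [k1 [k1a k1b k1c]] := @ivt_up f 0 i0 (c + 1) (fun k' h1 h2 => A' k' h1 ltac:(lia)) (leq0n _) ltac:(rewrite f0; lia) ltac:(lia).
have [k2 [k2a k2b k2c]] := @ivt_down f i0 N.-1 (c + 1) (fun k' h1 h2 => A' k' ltac:(lia) h2) ltac:(lia) ltac:(lia) ltac:(rewrite fN; lia).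
have n1 : k1 != i0 by apply/eqP => e; subst k1; lia.
have n2 : k2 != i0 by apply/eqP => e; subst k2; lia.
have C1 := HP k1 ltac:(lia); have C2 := HP k2 ltac:(lia).
have := @hp_inj' _ _ _ _ _ k1 k2 H ltac:(lia) ltac:(lia).
move: C1 C2; rewrite /inC; lia.
Qed.

Lemma notF9 m n k l c s t f N : hp (inC m n k l c) s t f N ->
  1 <= c -> 1 <= l -> c + l < n -> ~ F9 m n k l c s t.
Proof.
move=> H c1 l1 cl [a [[hs ht]|[hs ht]]].
  exact: (F9_bot H).
have H' := mirror cl H.
apply: (F9_bot H') => //; rewrite /mir /=; lia.
Qed.

Lemma hp_eq P s t f N i j : hp P s t f N -> i < N -> j < N ->
  (i = j <-> ((f i).1 = (f j).1 /\ (f i).2 = (f j).2)).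
Proof.
move=> H hi hj; split; first by move=> ->.
by case=> e1 e2; apply: (hp_inj' H).
Qed.

Lemma hp_int P s t f N j : hp P s t f N -> 0 < j -> j < N.-1 ->
  [/\ sg_adj (f j.-1) (f j), sg_adj (f j) (f j.+1), P (f j.-1), P (f j.+1) &
      f j.-1 <> f j.+1].
Proof.
move=> H j0 jN; have e : j.-1.+1 = j by lia.
split.
- by rewrite -{2}e; apply: (hp_adj H); lia.
- by apply: (hp_adj H); lia.
- by apply: (hp_P H); lia.
- by apply: (hp_P H); lia.
- case: H => _ _ _ _ [I _ _] => /I; lia.
Qed.

Lemma neq_of (f : nat -> vtx) i j u v : f i = u -> f j = v -> u <> v -> i <> j.
Proof. by move=> <- <- h e; subst. Qed.

Lemma nbr31 n l v : 1 <= l -> inC 3 n 1 l 1 v -> sg_adj (3,1) v -> v = (2,1) \/ v = (2,2).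
Proof.
case: v => x y; rewrite sg_adjE /inC /= => l1 C a.
have [hx hy] : x = 2 /\ (y = 1 \/ y = 2) by lia.
by subst x; case: hy => ->; [left|right].
Qed.

Lemma row2 n l v : inC 3 n 1 l 1 v -> v.2 = 2 -> 1 <= l -> v = (1,2) \/ v = (2,2).
Proof.
case: v => x y; rewrite /inC /= => C e l1; subst y.
have hx : x = 1 \/ x = 2 by lia.
by case: hx => ->; [left|right].
Qed.


Ltac clr := repeat match goal with
 | H : ~ _ |- _ => clear H
 | H : is_true (sg_adj _ _) |- _ => clear H
 | H : is_true (inC _ _ _ _ _ _) |- _ => clear H
 end.
Ltac sl := clr; lia.

Lemma F7A n l s t f N : hp (inC 3 n 1 l 1) s t f N -> 3 <= n -> 1 <= l -> 1 + l < n ->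
  s = (1,1) -> t = (2,2) -> False.
Proof.
move=> H n3 l1 ln es et; have H' := H; case: H' => N0 f0 fN A [I HP HC].
rewrite es in f0; rewrite et in fN.
have N2 : 1 < N.
  case: (ltnP 1 N) => // h; have e : N.-1 = 0 by sl.
  by move: fN; rewrite e f0.
have [j hj fj] := HC (3,1) ltac:(rewrite /inC /=; lia).
have jb : 0 < j < N.-1.
  by move: (neq_of fj f0 ltac:(by [])) (neq_of fj fN ltac:(by [])); sl.
have [a1 a2 C1 C2 ne] := hp_int H (j:=j) ltac:(sl) ltac:(sl).
rewrite fj in a1 a2.
have [e1|e1] := nbr31 l1 C1 (sg_adj_sym a1); last first.
  by have := I j.-1 N.-1 ltac:(sl) ltac:(sl) (etrans e1 (esym fN)); sl.
have [e2|e2] := nbr31 l1 C2 a2; first by case: ne; rewrite e1 e2.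
have jN' := I j.+1 N.-1 ltac:(sl) ltac:(sl) (etrans e2 (esym fN)).
have [i0 hi0 fi0] := HC (1,3) ltac:(rewrite /inC /=; lia).
have i0j : 0 < i0 < j.-1.
  move: (neq_of fi0 f0 ltac:(by [])) (neq_of fi0 e1 ltac:(by [])).
  move: (neq_of fi0 fj ltac:(by [])) (neq_of fi0 fN ltac:(by [])).
  sl.
have [k1 [k1a k1b k1c]] := @ivt_up f 0 i0 2 (fun k' h1 h2 => A k' ltac:(sl)) (leq0n _) ltac:(by rewrite f0) ltac:(by rewrite fi0).
have [k2 [k2a k2b k2c]] := @ivt_down f i0 j.-1 2 (fun k' h1 h2 => A k' ltac:(sl)) ltac:(sl) ltac:(by rewrite fi0) ltac:(by rewrite e1).
have n1 : k1 < i0.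
  suff: k1 <> i0 by sl.
  by move=> e; subst k1; rewrite fi0 in k1c.
have n2 : i0 < k2.
  suff: k2 <> i0 by sl.
  by move=> e; subst k2; rewrite fi0 in k2c.
have r1 := row2 (HP k1 ltac:(sl)) k1c l1.
have r2 := row2 (HP k2 ltac:(sl)) k2c l1.
case: r1 => r1; last by have := I k1 N.-1 ltac:(sl) ltac:(sl) (etrans r1 (esym fN)); sl.
case: r2 => r2; last by have := I k2 N.-1 ltac:(sl) ltac:(sl) (etrans r2 (esym fN)); sl.
by have := I k1 k2 ltac:(sl) ltac:(sl) (etrans r1 (esym r2)); sl.
Qed.

Lemma nbr11 n l v : inC 3 n 1 l 1 v -> sg_adj (1,1) v ->
  [\/ v = (1,2), v = (2,1) | v = (2,2)].
Proof.
case: v => x y; rewrite sg_adjE /inC /= => C a.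
have [hx|[hx|hx]] : (x = 1 /\ y = 2) \/ (x = 2 /\ y = 1) \/ (x = 2 /\ y = 2) by lia.
all: case: hx => -> ->; by [constructor 1|constructor 2|constructor 3].
Qed.

Lemma F7B n l s t f N : hp (inC 3 n 1 l 1) s t f N -> 3 <= n -> 1 <= l -> 1 + l < n ->
  s = (1,2) -> t = (2,1) -> False.
Proof.
move=> H n3 l1 ln es et; have H' := H; case: H' => N0 f0 fN A [I HP HC].
rewrite es in f0; rewrite et in fN.
have N2 : 1 < N.
  case: (ltnP 1 N) => // h; have e : N.-1 = 0 by sl.
  by move: fN; rewrite e f0.
have [j hj fj] := HC (3,1) ltac:(rewrite /inC /=; lia).
have jb : 0 < j < N.-1.
  by move: (neq_of fj f0 ltac:(by [])) (neq_of fj fN ltac:(by [])); sl.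
have [a1 a2 C1 C2 ne] := hp_int H (j:=j) ltac:(sl) ltac:(sl).
rewrite fj in a1 a2.
have [e1|e1] := nbr31 l1 C1 (sg_adj_sym a1).
  by have := I j.-1 N.-1 ltac:(sl) ltac:(sl) (etrans e1 (esym fN)); sl.
have [e2|e2] := nbr31 l1 C2 a2; last by case: ne; rewrite e1 e2.
have jN' := I j.+1 N.-1 ltac:(sl) ltac:(sl) (etrans e2 (esym fN)).
have [j1 hj1 fj1] := HC (1,1) ltac:(rewrite /inC /=; lia).
have j1b : 0 < j1 < N.-1.
  by move: (neq_of fj1 f0 ltac:(by [])) (neq_of fj1 fN ltac:(by [])); sl.
have j1j := neq_of fj1 fj ltac:(by []).
have [b1 b2 D1 D2 ne'] := hp_int H (j:=j1) ltac:(sl) ltac:(sl).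
rewrite fj1 in b1 b2.
have ej1 : j1 = 1.
  case: (nbr11 D1 (sg_adj_sym b1)) => g1.
  - by have := I j1.-1 0 ltac:(sl) ltac:(sl) (etrans g1 (esym f0)); sl.
  - by have := I j1.-1 N.-1 ltac:(sl) ltac:(sl) (etrans g1 (esym fN)); sl.
  - by have := I j1.-1 j.-1 ltac:(sl) ltac:(sl) (etrans g1 (esym e1)); move: j1j; sl.
subst j1.
have eN : N = 5.
  case: (nbr11 D2 b2) => g1.
  - by have := I 2 0 ltac:(sl) ltac:(sl) (etrans g1 (esym f0)); sl.
  - by have := I 2 N.-1 ltac:(sl) ltac:(sl) (etrans g1 (esym fN)); move: j1j; sl.
  - by have := I 2 j.-1 ltac:(sl) ltac:(sl) (etrans g1 (esym e1)); sl.
subst N.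
have ej : j = 3 by sl.
subst j.
have [i0 hi0 fi0] := HC (1,3) ltac:(rewrite /inC /=; lia).
have := neq_of fi0 f0 ltac:(by []).
have := neq_of fi0 fj1 ltac:(by []).
have := neq_of fi0 e1 ltac:(by []).
have := neq_of fi0 fj ltac:(by []).
have := neq_of fi0 fN ltac:(by []).
move: hi0; clear; lia.
Qed.

Lemma nbrA m v : 2 <= m -> inC m 3 1 1 1 v -> sg_adj (m,1) v -> v = (m.-1,1) \/ v = (m.-1,2).
Proof.
case: v => x y; rewrite sg_adjE /inC /= => m2 C a.
have [hx hy] : x = m.-1 /\ (y = 1 \/ y = 2) by lia.
by subst x; case: hy => ->; [left|right].
Qed.

Lemma nbrB m v : 2 <= m -> inC m 3 1 1 1 v -> sg_adj (m,3) v -> v = (m.-1,3) \/ v = (m.-1,2).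
Proof.
case: v => x y; rewrite sg_adjE /inC /= => m2 C a.
have [hx hy] : x = m.-1 /\ (y = 3 \/ y = 2) by lia.
by subst x; case: hy => ->; [left|right].
Qed.

Lemma F8_3 m s t f N : hp (inC m 3 1 1 1) s t f N -> 4 <= m ->
  s.1 < m.-1 -> t = (m.-1, 2) -> False.
Proof.
move=> H m4 hs et; have H' := H; case: H' => N0 f0 fN A [I HP HC].
rewrite et in fN.
have [j hj fj] := HC (m,1) ltac:(rewrite /inC /=; lia).
have jb : 0 < j < N.-1.
  move: (neq_of fj f0 ltac:(by move=> e; move: hs; rewrite -e /=; lia)).
  by move: (neq_of fj fN ltac:(by case; lia)); sl.
have [a1 a2 C1 C2 ne] := hp_int H (j:=j) ltac:(sl) ltac:(sl).
rewrite fj in a1 a2.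
have [e1|e1] := nbrA (m:=m) ltac:(sl) C1 (sg_adj_sym a1); last first.
  by have := I j.-1 N.-1 ltac:(sl) ltac:(sl) (etrans e1 (esym fN)); sl.
have [e2|e2] := nbrA (m:=m) ltac:(sl) C2 a2; first by case: ne; rewrite e1 e2.
have jN' := I j.+1 N.-1 ltac:(sl) ltac:(sl) (etrans e2 (esym fN)).
have [j' hj' fj'] := HC (m,3) ltac:(rewrite /inC /=; lia).
have j'b : 0 < j' < N.-1.
  move: (neq_of fj' f0 ltac:(by move=> e; move: hs; rewrite -e /=; lia)).
  by move: (neq_of fj' fN ltac:(by case; lia)); sl.
have [b1 b2 D1 D2 ne'] := hp_int H (j:=j') ltac:(sl) ltac:(sl).
rewrite fj' in b1 b2.
have [g1|g1] := nbrB (m:=m) ltac:(sl) D1 (sg_adj_sym b1); last first.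
  by have := I j'.-1 N.-1 ltac:(sl) ltac:(sl) (etrans g1 (esym fN)); sl.
have [g2|g2] := nbrB (m:=m) ltac:(sl) D2 b2; first by case: ne'; rewrite g1 g2.
have := I j'.+1 N.-1 ltac:(sl) ltac:(sl) (etrans g2 (esym fN)).
have := neq_of fj fj' ltac:(by []).
sl.
Qed.

Lemma F8_1 m s t f N : hp (inC m 3 1 1 1) s t f N -> 3 <= m ->
  s = (m.-1, 1) -> t = (m.-1, 3) -> False.
Proof.
move=> H m3 es et; have H' := H; case: H' => N0 f0 fN A [I HP HC].
rewrite es in f0; rewrite et in fN.
have N2 : 1 < N.
  case: (ltnP 1 N) => // h; have e : N.-1 = 0 by sl.
  by move: fN; rewrite e f0.
have [j hj fj] := HC (m,1) ltac:(rewrite /inC /=; lia).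
have jb : 0 < j < N.-1.
  by move: (neq_of fj f0 ltac:(by case; lia)) (neq_of fj fN ltac:(by case; lia)); sl.
have [a1 a2 C1 C2 ne] := hp_int H (j:=j) ltac:(sl) ltac:(sl).
rewrite fj in a1 a2.
have [e1|e1] := nbrA (m:=m) ltac:(sl) C1 (sg_adj_sym a1); last first.
  have [e2|e2] := nbrA (m:=m) ltac:(sl) C2 a2; last by case: ne; rewrite e1 e2.
  by have := I j.+1 0 ltac:(sl) ltac:(sl) (etrans e2 (esym f0)); sl.
have ej : j = 1 by have := I j.-1 0 ltac:(sl) ltac:(sl) (etrans e1 (esym f0)); sl.
subst j.
have [e2|e2] := nbrA (m:=m) ltac:(sl) C2 a2; first by case: ne; rewrite e1 e2.
have [j' hj' fj'] := HC (m,3) ltac:(rewrite /inC /=; lia).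
have j'b : 0 < j' < N.-1.
  by move: (neq_of fj' f0 ltac:(by case; lia)) (neq_of fj' fN ltac:(by case; lia)); sl.
have [b1 b2 D1 D2 ne'] := hp_int H (j:=j') ltac:(sl) ltac:(sl).
rewrite fj' in b1 b2.
have [g1|g1] := nbrB (m:=m) ltac:(sl) D1 (sg_adj_sym b1).
  by have := I j'.-1 N.-1 ltac:(sl) ltac:(sl) (etrans g1 (esym fN)); sl.
have [g2|g2] := nbrB (m:=m) ltac:(sl) D2 b2; last by case: ne'; rewrite g1 g2.
have := I j'.+1 N.-1 ltac:(sl) ltac:(sl) (etrans g2 (esym fN)).
have := I j'.-1 2 ltac:(sl) ltac:(sl) (etrans g1 (esym e2)).
move=> h1 h2.
have eN : N = 5 by sl.
have ej' : j' = 3 by sl.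
subst N j'.
have [i0 hi0 fi0] := HC (1,1) ltac:(rewrite /inC /=; lia).
have := neq_of fi0 f0 ltac:(by case; lia).
have := neq_of fi0 fj ltac:(by case; lia).
have := neq_of fi0 e2 ltac:(by case; lia).
have := neq_of fi0 fj' ltac:(by case; lia).
have := neq_of fi0 fN ltac:(by case; lia).
move: hi0; clear; lia.
Qed.

Lemma nbr13 v : inC 3 3 1 1 1 v -> sg_adj (1,3) v ->
  [\/ v = (1,2), v = (2,2) | v = (2,3)].
Proof.
case: v => x y; rewrite sg_adjE /inC /= => C a.
have [hx|[hx|hx]] : (x = 1 /\ y = 2) \/ (x = 2 /\ y = 2) \/ (x = 2 /\ y = 3) by lia.
all: case: hx => -> ->; by [constructor 1|constructor 2|constructor 3].
Qed.

Lemma F8_2 s t f N : hp (inC 3 3 1 1 1) s t f N ->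
  s = (1, 1) -> t = (2, 3) -> False.
Proof.
move=> H es et; have H' := H; case: H' => N0 f0 fN A [I HP HC].
rewrite es in f0; rewrite et in fN.
have N2 : 1 < N.
  case: (ltnP 1 N) => // h; have e : N.-1 = 0 by sl.
  by move: fN; rewrite e f0.
have [j' hj' fj'] := HC (3,3) ltac:(rewrite /inC /=; lia).
have j'b : 0 < j' < N.-1.
  by move: (neq_of fj' f0 ltac:(by [])) (neq_of fj' fN ltac:(by [])); sl.
have [b1 b2 D1 D2 ne'] := hp_int H (j:=j') ltac:(sl) ltac:(sl).
rewrite fj' in b1 b2.
have [g1|g1] := nbrB (m:=3) ltac:(sl) D1 (sg_adj_sym b1).
  by have := I j'.-1 N.-1 ltac:(sl) ltac:(sl) (etrans g1 (esym fN)); sl.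
have [g2|g2] := nbrB (m:=3) ltac:(sl) D2 b2; last by case: ne'; rewrite g1 g2.
have ej' := I j'.+1 N.-1 ltac:(sl) ltac:(sl) (etrans g2 (esym fN)).
have [j hj fj] := HC (3,1) ltac:(rewrite /inC /=; lia).
have jb : 0 < j < N.-1.
  by move: (neq_of fj f0 ltac:(by [])) (neq_of fj fN ltac:(by [])); sl.
have jj' := neq_of fj fj' ltac:(by []).
have [a1 a2 C1 C2 ne] := hp_int H (j:=j) ltac:(sl) ltac:(sl).
rewrite fj in a1 a2.
have ej : j.+1 = j'.-1.
  have [e1|e1] := nbrA (m:=3) ltac:(sl) C1 (sg_adj_sym a1).
    have [e2|e2] := nbrA (m:=3) ltac:(sl) C2 a2; first by case: ne; rewrite e1 e2.
    exact: I j.+1 j'.-1 ltac:(sl) ltac:(sl) (etrans e2 (esym g1)).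
  by have := I j.-1 j'.-1 ltac:(sl) ltac:(sl) (etrans e1 (esym g1)); move: jj'; sl.
have [i0 hi0 fi0] := HC (1,3) ltac:(rewrite /inC /=; lia).
have i0b : 0 < i0 < N.-1.
  by move: (neq_of fi0 f0 ltac:(by [])) (neq_of fi0 fN ltac:(by [])); sl.
have i0j := neq_of fi0 fj ltac:(by []).
have i0j' := neq_of fi0 fj' ltac:(by []).
have [c1 c2 E1 E2 ne''] := hp_int H (j:=i0) ltac:(sl) ltac:(sl).
rewrite fi0 in c1 c2.
have [h1|h1|h1] := nbr13 E1 (sg_adj_sym c1); last first.
- by have := I i0.-1 N.-1 ltac:(sl) ltac:(sl) (etrans h1 (esym fN)); sl.
- by have := I i0.-1 j'.-1 ltac:(sl) ltac:(sl) (etrans h1 (esym g1)); move: i0j'; sl.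
have [h2|h2|h2] := nbr13 E2 c2.
- by case: ne''; rewrite h1 h2.
- by have := I i0.+1 j'.-1 ltac:(sl) ltac:(sl) (etrans h2 (esym g1)); move: i0j; sl.
- by have := I i0.+1 N.-1 ltac:(sl) ltac:(sl) (etrans h2 (esym fN)); move: i0j'; sl.
Qed.

Theorem lemma7 (m n k l c : nat) (s t : nat * nat) :
  2 <= m -> 3 <= n -> 1 <= k -> 1 <= l -> 1 <= c ->
  1 <= n - l - c -> 1 <= m - k ->
  inC m n k l c s -> inC m n k l c t -> s <> t -> s.1 <= t.1 ->
  ham_path (inC m n k l c) s t ->
  [/\ ~ F1 m n k l c s t, ~ F3 m n k l c s t, ~ F7 m n k l c s t,
      ~ F8 m n k l c s t & ~ F9 m n k l c s t].
Proof.
move=> hm hn hk hl hc hd ha Cs Ct st sxt /ham_hp [f [N H]].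
have cl : c + l < n by lia.
split.
- exact: notF1 H st.
- exact: notF3 H st.
- rewrite /F7; case=> m3 a2 hh.
  have ek : k = 1 by lia.
  subst m k.
  case: hh => [[c1 hh]|[d1 hh]].
  + subst c.
    case: hh => [[[es et]|[es et]]|[[es et]|[es et]]]; subst s t => //.
    * exact: (F7A H).
    * exact: (F7B H).
  + have H' := mirror cl H; rewrite d1 in H'.
    case: hh => [[[es et]|[es et]]|[[es et]|[es et]]]; subst s t => //.
    * apply: (F7A H') => //; first by lia.
      - by rewrite /mir /=; congr pair; lia.
      - by rewrite /mir /=; congr pair; lia.
    * apply: (F7B H') => //; first by lia.
      - by rewrite /mir /=; congr pair; lia.
      - by rewrite /mir /=; congr pair; lia.
- rewrite /F8; case=> n3 k1 c1 d1 hh.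
  subst n k c.
  have el : l = 1 by lia.
  subst l.
  case: s t Cs Ct st sxt H {cl hd ha hh} (hh) => [sx sy] [tx ty] Cs Ct st sxt H.
  move: Cs Ct; rewrite /inC /= => Cs Ct.
  have cl : 1 + 1 < 3 by [].
  case=> [[a2 hs ht hd2]|[a2 hs ht hd2]|[a2 hs et]] /=; simpl in *.
  + case: hd2 => hd2.
    * have H' := mirror cl H.
      apply: (F8_1 H'); first lia.
      - by rewrite /mir /=; congr pair; lia.
      - by rewrite /mir /=; congr pair; lia.
    * by apply: (F8_1 H); [lia | congr pair; lia | congr pair; lia].
  + have em : m = 3 by lia.
    subst m.
    case: hd2 => hd2.
    * have H' := mirror cl H.
      apply: (F8_2 H').
      - by rewrite /mir /=; congr pair; lia.
      - by rewrite /mir /=; congr pair; lia.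
    * by apply: (F8_2 H); congr pair; lia.
  + by apply: (F8_3 H) => //=; lia.
- exact: notF9 H hc hl cl.
Qed.
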